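(* Let $X$ be a weak complicial set, $x\in X_0$ a vertex and $n\ge 1$. Let $\alpha,\alpha',\beta,\beta'$ be $n$-simplices of $X$ whose restrictions to $\partial\Delta[n]$ are constant at $x$, with $\alpha\sim_{\partial\Delta[n]}\alpha'$ and $\beta\sim_{\partial\Delta[n]}\beta'$. Let $\theta:\Delta^n[n+1]\to X$ be any stratified map whose face $d_{n-1}\theta$ is $\alpha$, whose face $d_{n+1}\theta$ is $\beta$, and whose other faces $d_i\theta$, $i\notin\{n-1,n,n+1\}$, are constant at $x$; and let $\theta'$ be any such map for $\alpha',\beta'$. Then $d_n\theta\sim_{\partial\Delta[n]} d_n\theta'$. (Such $\theta,\theta'$ exist, and the class $[d_n\theta]$ in $\tau_n(X,x)$ thus depends only on $[\alpha]$ and $[\beta]$.)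
   Context: A stratified simplicial set is a pair $(X,tX)$ where $X$ is a simplicial set and $tX$ is a set of simplices of $X$ (thin simplices) containing all degenerate simplices and no $0$-simplices; stratified maps are simplicial maps preserving thin simplices. A regular stratified subset $(X,tX)\subset(Y,tY)$ means $X\subset Y$, $tX=X\cap tY$. For $n\ge1$, $\Delta[n]_t$ is $\Delta[n]$ with thin simplices the degenerate ones and $\mathrm{Id}_{[n]}$. For $k\in[n]$, $\Delta^k[n]$ is $\Delta[n]$ with thin simplices the degenerate ones and all $\alpha:[m]\to[n]$ with $\{k-1,k,k+1\}\cap[n]\subset\mathrm{Im}(\alpha)$; $\Lambda^k[n]$ is the regular stratified subset of $\Delta^k[n]$ generated by the faces $\delta_i$, $i\neq k$; $\Delta^k[n]''$ (resp. $\Lambda^k[n]'$) is $\Delta^k[n]$ (resp. $\Lambda^k[n]$) with additionally all its $(n-1)$-simplices thin; $\Delta^k[n]'=\Delta^k[n]\cup\Lambda^k[n]'$. A weak complicial set is a stratified simplicial set with the right lifting property against $\Lambda^k[n]\hookrightarrow\Delta^k[n]$ ($n\ge1$, $k\in[n]$) and $\Delta^k[n]'\hookrightarrow\Delta^k[n]''$ ($n\ge2$, $k\in[n]$). The product $X\circledast Y$ has underlying simplicial set $X\times Y$, with $(x,y)$ thin iff $x$ and $y$ are thin. For stratified maps $f,g:A\to X$ and an inclusion $B\hookrightarrow A$ with $f|_B=g|_B$, $f\sim_B g$ means there is a stratified map $H:A\circledast\Delta[1]_t\to X$ with $H|_{A\times\{0\}}=f$, $H|_{A\times\{1\}}=g$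 and $H|_{B\circledast\Delta[1]_t}=f|_B\circ\mathrm{proj}_B$. Here $n$-simplices $\alpha$ of $X$ are regarded as stratified maps $\Delta[n]\to X$ where $\Delta[n]$ carries the stratification with only degenerate simplices thin, and $\partial\Delta[n]$ the induced one. For $n\ge1$, $\tau_n(X,x)$ is the set of equivalence classes under $\sim_{\partial\Delta[n]}$ of $n$-simplices $\alpha$ of $X$ whose restriction to $\partial\Delta[n]$ is constant at $x$. *)

(* Defs.v *)
From mathcomp Require Import all_boot.
From mathcomp Require Import zify.
Set Implicit Arguments.
Unset Strict Implicit.
Unset Printing Implicit Defensive.

Definition mono m n (f : {ffun 'I_m.+1 -> 'I_n.+1}) : bool :=
  [forall i : 'I_m.+1, forall j : 'I_m.+1, (i <= j) ==> (f i <= f j)].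

Lemma monoP m n (f : {ffun 'I_m.+1 -> 'I_n.+1}) :
  reflect (forall i j : 'I_m.+1, i <= j -> f i <= f j) (mono f).
Proof.
apply: (iffP forallP) => [H i j hij | H i].
  by have /forallP/(_ j)/implyP := H i; apply.
by apply/forallP => j; apply/implyP; exact: H.
Qed.

Definition Dmap m n := {f : {ffun 'I_m.+1 -> 'I_n.+1} | mono f}.

Definition dfun m n (f : Dmap m n) : 'I_m.+1 -> 'I_n.+1 := fun i => sval f i.

Lemma sig_bool_eq (T : Type) (P : T -> bool) (a b : {x | P x}) :
  sval a = sval b -> a = b.
Proof.
case: a b => [a pa] [b pb] /= e; subst b; congr exist; exact: bool_irrelevance.
Qed.

Lemma dmap_eq m n (f g : Dmap m n) : (forall i, dfun f i = dfun g i) -> f = g.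
Proof. by move=> H; apply: sig_bool_eq; apply/ffunP. Qed.

Lemma dfun_mono m n (f : Dmap m n) (i j : 'I_m.+1) : i <= j -> dfun f i <= dfun f j.
Proof. exact: (monoP _ (proj2_sig f)). Qed.

Lemma did_mono n : mono [ffun i : 'I_n.+1 => i].
Proof. by apply/monoP => i j; rewrite !ffunE. Qed.

Definition did n : Dmap n n := exist (@mono _ _) _ (did_mono n).

Lemma dcomp_mono l m n (g : Dmap m n) (f : Dmap l m) :
  mono [ffun i => dfun g (dfun f i)].
Proof. by apply/monoP => i j hij; rewrite !ffunE; do 2 apply: dfun_mono. Qed.

Definition dcomp l m n (g : Dmap m n) (f : Dmap l m) : Dmap l n :=
  exist (@mono _ _) _ (dcomp_mono g f).

Lemma dconst_mono m n (j : 'I_n.+1) : mono [ffun _ : 'I_m.+1 => j].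
Proof. by apply/monoP => i i' _; rewrite !ffunE. Qed.

Definition dconst m n (j : 'I_n.+1) : Dmap m n := exist (@mono _ _) _ (dconst_mono m j).

Lemma dface_mono n (i : 'I_n.+2) : mono [ffun j : 'I_n.+1 => lift i j].
Proof. by apply/monoP => j j' h; rewrite !ffunE /= leq_bump2. Qed.

Definition dface n (i : 'I_n.+2) : Dmap n n.+1 := exist (@mono _ _) _ (dface_mono i).

Definition dsurj m n (f : Dmap m n) : bool :=
  [forall j : 'I_n.+1, exists i : 'I_m.+1, dfun f i == j].

Record sSet := SSet {
  ssimp :> nat -> Type;
  sact : forall m n, Dmap m n -> ssimp n -> ssimp m;
  sact_id : forall n (x : ssimp n), sact (did n) x = x;
  sact_comp : forall l m n (f : Dmap l m) (g : Dmap m n) (x : ssimp n),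
      sact (dcomp g f) x = sact f (sact g x) }.
Arguments sact {s m n}.

Definition degen (X : sSet) n (x : X n) : Prop :=
  exists m (f : Dmap n m) (y : X m), m < n /\ x = sact f y.

Record strat := Strat {
  ssset :> sSet;
  thin : forall n, ssset n -> Prop;
  thin_deg : forall n (x : ssset n), degen x -> thin x;
  thin0 : forall x : ssset 0, ~ thin x }.
Arguments thin {s n}.

Record smap (X Y : strat) := SMap {
  smf :> forall n, X n -> Y n;
  smf_nat : forall m n (f : Dmap m n) (x : X n), smf (sact f x) = sact f (smf x);
  smf_thin : forall n (x : X n), thin x -> thin (smf x) }.

Lemma dcomp_id m n (x : Dmap m n) : dcomp x (did m) = x.
Proof. by apply: dmap_eq => i; rewrite /dfun /= !ffunE /dfun /= ?ffunE. Qed.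

Lemma dcomp_assoc k l m n (x : Dmap m n) (g : Dmap l m) (f : Dmap k l) :
  dcomp x (dcomp g f) = dcomp (dcomp x g) f.
Proof. by apply: dmap_eq => i; rewrite /dfun /= !ffunE /dfun /= ?ffunE. Qed.

Definition SDelta n : sSet :=
  @SSet (fun m => Dmap m n) (fun m m' f x => dcomp x f)
    (fun m x => dcomp_id x) (fun l m m' f g x => dcomp_assoc x g f).

Definition DeltaStrat n (E : forall m, Dmap m n -> Prop)
  (E0 : forall x : Dmap 0 n, ~ E 0 x) : strat.
Proof.
refine (@Strat (SDelta n) (fun m x => @degen (SDelta n) m x \/ E m x)
          (fun m x d => or_introl d) _).
move=> x [[m [f [y [hm _]]]] | e] //; exact: E0 e.
Defined.

Definition DeltaS n : strat := @DeltaStrat n (fun _ _ => False) (fun _ h => h).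

Definition isId n m (x : Dmap m n) : Prop := m = n /\ forall i, val (dfun x i) = val i.

(* Delta[n.+1]_t : degenerate simplices and the identity thin (n.+1 >= 1) *)
Definition DeltaT (n : nat) : strat.
Proof. refine (@DeltaStrat n.+1 (@isId n.+1) _). by move=> x []. Defined.

Definition kthin n (k : 'I_n.+2) m (x : Dmap m n.+1) : Prop :=
  forall j : 'I_n.+2, k.-1 <= j <= k.+1 -> exists i, dfun x i = j.

Lemma kthin0 n (k : 'I_n.+2) (x : Dmap 0 n.+1) : ~ kthin k x.
Proof.
move=> H.
have hk := ltn_ord k.
have h1 : k.-1 <= (inord k.-1 : 'I_n.+2) <= k.+1 by rewrite inordK; lia.
have h2 : k.-1 <= (inord k.-1.+1 : 'I_n.+2) <= k.+1 by rewrite inordK; lia.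
have [i1 e1] := H _ h1.
have [i2 e2] := H _ h2.
have ei : i1 = i2 by rewrite (ord1 i1) (ord1 i2).
move: e1 e2; rewrite ei => -> /(congr1 (@nat_of_ord _)); rewrite !inordK; lia.
Qed.

Definition DeltaK n (k : 'I_n.+2) : strat := @DeltaStrat n.+1 (@kthin n k) (@kthin0 n k).

Definition inLam n (k : 'I_n.+1) m (x : Dmap m n) : bool :=
  [exists i : 'I_n.+1, (i != k) && [forall j, dfun x j != i]].

Definition DeltaK2 n (k : 'I_n.+3) : strat.
Proof.
refine (@DeltaStrat n.+2 (fun m x => @kthin n.+1 k m x \/ m = n.+1) _).
by move=> x [/kthin0|].
Defined.

(* Delta^k[n.+2]' = Delta^k[n.+2] \cup Lambda^k[n.+2]' :
   additionally the (n+1)-simplices of Lambda^k[n.+2] thin *)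
Definition DeltaK1 n (k : 'I_n.+3) : strat.
Proof.
refine (@DeltaStrat n.+2 (fun m x => @kthin n.+1 k m x \/ (m = n.+1 /\ inLam k x)) _).
by move=> x [/kthin0|[]].
Defined.

Definition sub_closed (Y : sSet) (P : forall n, pred (Y n)) : Prop :=
  forall m n (f : Dmap m n) (y : Y n), P n y -> P m (sact f y).

Unset Implicit Arguments.
Section Sub.
Variables (Y : strat) (P : forall n, pred (Y n)) (HP : sub_closed P).

Definition sub_act m n (f : Dmap m n) (y : {y : Y n | P n y}) : {y : Y m | P m y} :=
  exist _ (sact f (sval y)) (HP _ _ f _ (proj2_sig y)).

Definition sub_sSet : sSet.
Proof.
refine (@SSet (fun n => {y : Y n | P n y}) sub_act _ _).
- by move=> n y; apply: sig_bool_eq; rewrite /= sact_id.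
- by move=> l m n f g y; apply: sig_bool_eq; rewrite /= sact_comp.
Defined.

Definition sub_strat : strat.
Proof.
refine (@Strat sub_sSet (fun n y => thin (sval y)) _ _).
- move=> n y [m [f [y' [hm e]]]]; apply: thin_deg.
  by exists m, f, (sval y'); split => //; rewrite e.
- by move=> y; apply: thin0.
Defined.

Definition sub_incl : smap sub_strat Y.
Proof. by refine (@SMap sub_strat Y (fun n y => sval y) _ _). Defined.
End Sub.
Set Implicit Arguments.
Arguments sub_incl {Y P HP}.

Definition prod_sSet (X Y : sSet) : sSet.
Proof.
refine (@SSet (fun n => (X n * Y n)%type)
           (fun m n f p => (sact f p.1, sact f p.2)) _ _).
- by move=> n [a b]; rewrite /= !sact_id.
- by move=> l m n f g [a b]; rewrite /= !sact_comp.
Defined.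

Definition sprod (X Y : strat) : strat.
Proof.
refine (@Strat (prod_sSet X Y) (fun n p => thin p.1 /\ thin p.2) _ _).
- move=> n [a b] [m [f [[a' b'] [hm e]]]]; case: e => -> ->.
  by split; apply: thin_deg; [exists m, f, a' | exists m, f, b'].
- by move=> [a b] [/thin0].
Defined.

Lemma inLam_closed n (k : 'I_n.+1) : @sub_closed (SDelta n) (fun m x => inLam k x).
Proof.
move=> m m' f y /existsP [i /andP [hik /forallP hj]].
by apply/existsP; exists i; rewrite hik /=; apply/forallP => j;
   rewrite /dfun /= ffunE; exact: hj.
Qed.

Definition LamK n (k : 'I_n.+2) : strat :=
  @sub_strat (DeltaK k) (fun m x => inLam k x) (@inLam_closed n.+1 k).

Definition LamIncl n (k : 'I_n.+2) : smap (LamK k) (DeltaK k) := sub_incl.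

Definition PrimeIncl n (k : 'I_n.+3) : smap (DeltaK1 k) (DeltaK2 k).
Proof.
refine (@SMap (DeltaK1 k) (DeltaK2 k) (fun m x => x) (fun _ _ _ _ => erefl) _).
by move=> m x [d | [e | [e _]]]; [left | right; left | right; right].
Defined.

Definition rlp (A B : strat) (i : smap A B) (X : strat) : Prop :=
  forall f : smap A X, exists g : smap B X, forall n (a : A n), g n (i n a) = f n a.

Definition weak_complicial (X : strat) : Prop :=
  (forall n (k : 'I_n.+2), rlp (LamIncl k) X) /\
  (forall n (k : 'I_n.+3), rlp (PrimeIncl k) X).

(* f ~_B g, with B a (closed) predicate of simplices of A;
   Delta[1]_t is DeltaT 0 *)
Definition htpy (A X : strat) (B : forall n, pred (A n)) (f g : smap A X) : Prop :=
  exists H : smap (sprod A (DeltaT 0)) X,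
    (forall n (a : A n), H n (a, dconst n (ord0 : 'I_2)) = f n a) /\
    (forall n (a : A n), H n (a, dconst n (ord_max : 'I_2)) = g n a) /\
    (forall n (a : A n) (t : Dmap n 1), B n a -> H n (a, t) = f n a).

Definition yon (X : strat) n (a : X n) : smap (DeltaS n) X.
Proof.
refine (@SMap (DeltaS n) X (fun m f => sact f a) _ _).
- by move=> m m' f g /=; rewrite sact_comp.
- move=> m g [[m' [f [y [hm e]]]] | []]; apply: thin_deg.
  exists m', f, (sact y a); split => //; rewrite e /= sact_comp //.
Defined.

Definition bdry n : forall m, pred (DeltaS n m) := fun m f => ~~ dsurj f.

Definition shtpy (X : strat) n (a b : X n) : Prop :=
  htpy (@bdry n) (yon a) (yon b).

Definition cst (X : strat) m (x : X 0) : X m := sact (dconst m (ord0 : 'I_1)) x.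

Definition bdry_const (X : strat) n (a : X n) (x : X 0) : Prop :=
  forall m (f : Dmap m n), ~~ dsurj f -> sact f a = cst m x.

(* Main.v *)
Require Import Defs.
From mathcomp Require Import all_boot zify.
Set Implicit Arguments. Unset Strict Implicit. Unset Printing Implicit Defensive.

Lemma dcompE l m n (g : Dmap m n) (f : Dmap l m) i : dfun (dcomp g f) i = dfun g (dfun f i).
Proof. by rewrite /dfun /= ffunE. Qed.
Lemma dfaceE n (i : 'I_n.+2) j : dfun (dface i) j = lift i j.
Proof. by rewrite /dfun /= ffunE. Qed.
Lemma didE n i : dfun (did n) i = i.
Proof. by rewrite /dfun /= ffunE. Qed.
Lemma dconstE m n (j : 'I_n.+1) i : dfun (dconst m j) i = j.
Proof. by rewrite /dfun /= ffunE. Qed.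

Section MkD.
Variables (m n : nat) (f : 'I_m.+1 -> 'I_n.+1).
Hypothesis H : forall i j : 'I_m.+1, i <= j -> f i <= f j.
Lemma mkD_mono : mono [ffun i => f i].
Proof. by apply/monoP => i j hij; rewrite !ffunE; apply: H. Qed.
Definition mkD : Dmap m n := exist (@mono m n) _ mkD_mono.
Lemma mkDE i : dfun mkD i = f i.
Proof. by rewrite /dfun /= ffunE. Qed.
End MkD.

Lemma dmap_eqv m n (f g : Dmap m n) : (forall i, val (dfun f i) = val (dfun g i)) -> f = g.
Proof. by move=> H; apply: dmap_eq => i; apply: val_inj; apply: H. Qed.

Lemma dcomp_idl m n (f : Dmap m n) : dcomp (did n) f = f.
Proof. by apply: dmap_eqv => i; rewrite dcompE didE. Qed.

Definition misses m N (g : Dmap m N) (i : 'I_N.+1) := forall t, dfun g t <> i.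

Section Lower.
Variables (N : nat) (i : 'I_N.+2).
Definition lowerf m (g : Dmap m N.+1) (t : 'I_m.+1) : 'I_N.+1 :=
  inord (minn (unbump i (dfun g t)) N).
Lemma lowerf_mono m (g : Dmap m N.+1) (t t' : 'I_m.+1) : t <= t' -> lowerf g t <= lowerf g t'.
Proof.
move=> h; have := dfun_mono g h; rewrite /lowerf !inordK ?ltnS ?geq_minr //.
move: (nat_of_ord (dfun g t)) (nat_of_ord (dfun g t')) => v v'.
rewrite /unbump; lia.
Qed.
Definition lower m (g : Dmap m N.+1) : Dmap m N := mkD (@lowerf_mono m g).
Lemma lower_val m (g : Dmap m N.+1) t :
  val (dfun (lower g) t) = minn (unbump i (dfun g t)) N.
Proof. by rewrite mkDE /lowerf /= inordK // ltnS geq_minr. Qed.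

Lemma lowerK m (g : Dmap m N.+1) : misses g i -> dcomp (dface i) (lower g) = g.
Proof.
move=> H; apply: dmap_eqv => t; rewrite dcompE dfaceE /= lower_val.
have ne : nat_of_ord (dfun g t) <> nat_of_ord i by move=> e; apply: (H t); apply: val_inj.
have := ltn_ord (dfun g t); have := ltn_ord i.
move: (nat_of_ord (dfun g t)) ne => v ne.
rewrite /bump /unbump; lia.
Qed.

Lemma lower_comp l m (g : Dmap m N.+1) (f : Dmap l m) :
  lower (dcomp g f) = dcomp (lower g) f.
Proof. by apply: dmap_eqv => t; rewrite dcompE !lower_val dcompE. Qed.

Lemma lower_face : lower (dface i) = did N.
Proof.
apply: dmap_eqv => t; rewrite lower_val dfaceE didE /= bumpK.
have := ltn_ord t; lia.
Qed.
End Lower.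

Lemma misses_comp l m N (g : Dmap m N) (f : Dmap l m) i :
  misses g i -> misses (dcomp g f) i.
Proof. by move=> H t; rewrite dcompE. Qed.

Lemma misses_face N (i : 'I_N.+2) : misses (dface i) i.
Proof. by move=> t; rewrite dfaceE; apply/eqP; rewrite eq_sym neq_lift. Qed.

Lemma noninj_factor m N (g : Dmap m N) (t t' : 'I_m.+1) :
  t < t' -> dfun g t = dfun g t' ->
  exists m' (f : Dmap m m') (g' : Dmap m' N),
    m' < m /\ g = dcomp g' f /\ (forall s, exists u, dfun g' s = dfun g u).
Proof.
case: m g t t' => [|m1] g t t' htt' e.
  by move: (ltn_ord t'); rewrite ltnS leqn0 => /eqP et'; rewrite et' in htt'.
move eqp: (nat_of_ord t) htt' => p htt'.
have hp : p <= m1 by have := ltn_ord t'; move: htt'; lia.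
have fmono : forall (q q' : 'I_m1.+2), q <= q' ->
   (inord (unbump p q) : 'I_m1.+1) <= (inord (unbump p q') : 'I_m1.+1).
  move=> q q' hq; have h1 := ltn_ord q; have h2 := ltn_ord q'.
  rewrite !inordK /unbump; lia.
exists m1, (mkD fmono), (dcomp g (dface (inord p.+1 : 'I_m1.+2))).
split => //; split; last by move=> s; exists (lift (inord p.+1) s); rewrite dcompE dfaceE.
apply: dmap_eq => q; rewrite !dcompE dfaceE mkDE.
have hq := ltn_ord q.
have vr : val (lift (inord p.+1 : 'I_m1.+2) (inord (unbump p q) : 'I_m1.+1)) =
          bump p.+1 (unbump p q).
  rewrite /= !inordK //; rewrite /unbump; lia.
case: (eqVneq (val q) p.+1) => hq1.
  have -> : lift (inord p.+1 : 'I_m1.+2) (inord (unbump p q) : 'I_m1.+1) = t.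
    by apply: val_inj; rewrite vr hq1 /= eqp /bump /unbump; lia.
  have hq2 : nat_of_ord q = p.+1 := hq1.
  apply: val_inj; apply/eqP; rewrite eqn_leq; apply/andP; split.
    by rewrite e; apply: dfun_mono; rewrite hq2.
  by apply: dfun_mono; rewrite hq2 eqp.
have hq2 : nat_of_ord q <> p.+1 by apply/eqP.
congr (dfun g _); apply: val_inj; rewrite vr /= /bump /unbump; move: hq2; lia.
Qed.

Lemma inj_surj_eq m N (g : Dmap m N) :
  injective (dfun g) -> (forall j, exists t, dfun g t = j) -> m = N.
Proof.
move=> inj surj.
have h1 := leq_card (dfun g) inj; rewrite !card_ord in h1.
pose h (j : 'I_N.+1) := odflt ord0 [pick t | dfun g t == j].
have hh : forall j, dfun g (h j) = j.
  move=> j; rewrite /h; case: pickP => [t /eqP //|H].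
  by have [t ht] := surj j; move: (H t); rewrite ht eqxx.
have hinj : injective h by move=> j j' e; rewrite -(hh j) -(hh j') e.
have h2 := leq_card h hinj; rewrite !card_ord in h2.
by apply/eqP; rewrite -eqSS eqn_leq h1 h2.
Qed.

Lemma inj_endo_id N (g : Dmap N N) : injective (dfun g) -> g = did N.
Proof.
move=> inj.
have strict : forall a b : 'I_N.+1, a < b -> dfun g a < dfun g b.
  move=> a b hab; rewrite ltn_neqAle dfun_mono; last exact: ltnW.
  rewrite andbT; apply/negP => /eqP /val_inj /inj e.
  by move: hab; rewrite e ltnn.
pose G u := nat_of_ord (dfun g (inord u)).
have c1 : forall u, u <= N -> u <= G u.
  elim=> [|u IH] hu; first exact: leq0n.
  have lt : (inord u : 'I_N.+1) < (inord u.+1 : 'I_N.+1) by rewrite !inordK; lia.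
  have := strict _ _ lt; have := IH (ltnW hu); rewrite /G. lia.
have c2 : forall d, d <= N -> G (N - d) <= N - d.
  elim=> [|d IH] hd.
    by rewrite subn0 /G; have := ltn_ord (dfun g (inord N)); lia.
  have lt : (inord (N - d.+1) : 'I_N.+1) < (inord (N - d) : 'I_N.+1) by rewrite !inordK; lia.
  have := strict _ _ lt; have := IH (ltnW hd); rewrite /G; lia.
apply: dmap_eqv => t; rewrite didE.
have ht : nat_of_ord t <= N := ltn_ord t.
have := c1 _ ht; have := c2 (N - t) (leq_subr _ _).
rewrite subKn // /G inord_val /=; lia.
Qed.

Lemma inj_or_not m N (g : Dmap m N) :
  injective (dfun g) \/ exists t t' : 'I_m.+1, t < t' /\ dfun g t = dfun g t'.
Proof.
case: (boolP [exists t : 'I_m.+1, exists t' : 'I_m.+1, (t < t') && (dfun g t == dfun g t')]).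
  by move=> /existsP [t /existsP [t' /andP [h /eqP e]]]; right; exists t, t'.
move=> /negP H; left => t t' e; case: (ltngtP t t') => h.
- by exfalso; apply: H; apply/existsP; exists t; apply/existsP; exists t'; rewrite h e eqxx.
- by exfalso; apply: H; apply/existsP; exists t'; apply/existsP; exists t; rewrite h e eqxx.
- exact: val_inj.
Qed.

Lemma surj_or_miss m N (g : Dmap m N) :
  (forall j, exists t, dfun g t = j) \/ exists i, misses g i.
Proof.
case: (boolP [forall j, exists t, dfun g t == j]).
  by move=> /forallP H; left => j; have /existsP [t /eqP e] := H j; exists t.
move=> /forallPn [j /existsPn H]; right; exists j => t e.
by move: (H t); rewrite e eqxx.
Qed.

Section Strat.
Variables (X : strat) (x : X 0).

Lemma sact_cst m m' (f : Dmap m' m) : sact f (cst m x) = cst m' x.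
Proof.
rewrite /cst -sact_comp; congr (sact _ x); apply: dmap_eq => i.
by rewrite dcompE !dconstE.
Qed.

Lemma cst_thin m : 0 < m -> thin (cst m x).
Proof. by move=> hm; apply: thin_deg; exists 0, (dconst m ord0), x. Qed.

Lemma noninj_thin m N (g : Dmap m N) (z : X N) (t t' : 'I_m.+1) :
  t < t' -> dfun g t = dfun g t' -> thin (sact g z).
Proof.
move=> h e; have [m' [f [g' [hm [-> _]]]]] := noninj_factor h e.
by apply: thin_deg; exists m', f, (sact g' z); split => //; rewrite sact_comp.
Qed.

Lemma endo_thin N (g : Dmap N N) (z : X N) : thin z -> thin (sact g z).
Proof.
move=> tz; case: (inj_or_not g) => [inj | [t [t' [h e]]]]; last exact: noninj_thin h e.
by rewrite (inj_endo_id inj) sact_id.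
Qed.

Lemma wit_thin N (z : X N.+1) (P : 'I_N.+2 -> Prop) m (g : Dmap m N.+1) :
  thin z -> 0 < m ->
  (forall i, ~ P i -> sact (dface i) z = cst N x) ->
  (forall i, P i -> exists t, dfun g t = i) ->
  thin (sact g z).
Proof.
move=> tz hm hf hP.
case: (inj_or_not g) => [inj | [t [t' [h e]]]]; last exact: noninj_thin h e.
case: (surj_or_miss g) => [surj | [i hi]].
  have em := inj_surj_eq inj surj; subst m.
  by rewrite (inj_endo_id inj) sact_id.
have nP : ~ P i by move=> /hP [t ht]; exact: hi t ht.
rewrite -(lowerK hi) sact_comp hf // sact_cst; exact: cst_thin.
Qed.
End Strat.


Section Horn.
Variables (X : strat) (n : nat) (k : 'I_n.+3) (y : 'I_n.+3 -> X n.+1).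
Hypothesis compat : forall i q : 'I_n.+3, i < q -> i != k -> q != k ->
  sact (dface (inord i : 'I_n.+2)) (y q) = sact (dface (inord q.-1 : 'I_n.+2)) (y i).
Hypothesis thinF : forall (i : 'I_n.+3) m (g : Dmap m n.+1), i != k ->
  kthin k (dcomp (dface i) g) -> thin (sact g (y i)).

Lemma V_indep m (g : Dmap m n.+2) (i q : 'I_n.+3) :
  misses g i -> misses g q -> i != k -> q != k ->
  sact (lower i g) (y i) = sact (lower q g) (y q).
Proof.
wlog: i q / i <= q.
  move=> W hi hq ik qk; case: (leqP i q) => h; first exact: W.
  by symmetry; apply: W => //; apply: ltnW.
rewrite leq_eqVlt => /orP [/eqP e | lt] hi hq ik qk.
  by have -> : i = q by apply: val_inj.
have hqb := ltn_ord q.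
have hi' : nat_of_ord i < n.+2 by lia.
set h := lower (inord i : 'I_n.+2) (lower q g).
have e1 : lower q g = dcomp (dface (inord i)) h.
  rewrite /h lowerK // => t e; have := congr1 val e; rewrite /= lower_val inordK //.
  have n1 : nat_of_ord (dfun g t) <> nat_of_ord i by move=> e'; apply: (hi t); apply: val_inj.
  have n2 : nat_of_ord (dfun g t) <> nat_of_ord q by move=> e'; apply: (hq t); apply: val_inj.
  have := ltn_ord (dfun g t); rewrite /unbump; lia.
have e2 : lower i g = dcomp (dface (inord q.-1)) h.
  apply: dmap_eqv => t; rewrite dcompE dfaceE /h /= !lower_val !inordK; try lia.
  have n1 : nat_of_ord (dfun g t) <> nat_of_ord i by move=> e'; apply: (hi t); apply: val_inj.
  have n2 : nat_of_ord (dfun g t) <> nat_of_ord q by move=> e'; apply: (hq t); apply: val_inj.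
  have := ltn_ord (dfun g t); rewrite /unbump /bump; lia.
by rewrite e1 e2 !sact_comp (compat lt ik qk).
Qed.

Definition pickm m (g : Dmap m n.+2) : 'I_n.+3 :=
  odflt k [pick i | (i != k) && [forall t, dfun g t != i]].

Lemma pickmP m (g : Dmap m n.+2) : inLam k g -> pickm g != k /\ misses g (pickm g).
Proof.
move=> /existsP [i /andP [ik /forallP H]]; rewrite /pickm; case: pickP.
  move=> j /andP [jk /forallP Hj] /=; split => // t e.
  by move: (Hj t); rewrite e eqxx.
by move=> H'; move: (H' i); rewrite ik (introT forallP H).
Qed.

Definition hval m (g : LamK k m) : X m :=
  sact (lower (pickm (sval g : Dmap m n.+2)) (sval g)) (y (pickm (sval g : Dmap m n.+2))).

Lemma hval_eq m (g : LamK k m) (i : 'I_n.+3) : i != k -> misses (sval g : Dmap m n.+2) i ->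
  hval g = sact (lower i (sval g : Dmap m n.+2)) (y i).
Proof.
move=> ik hi; have [pk pm] := pickmP (proj2_sig g).
by rewrite /hval; apply: V_indep.
Qed.

Definition hmap : smap (LamK k) X.
Proof.
refine (@SMap (LamK k) X hval _ _).
- move=> m m' f g.
  have [pk pm] := pickmP (proj2_sig g).
  rewrite (@hval_eq _ _ (pickm (sval g : Dmap m' n.+2))) //=; last exact: misses_comp.
  by rewrite lower_comp sact_comp.
- move=> m g; have [pk pm] := pickmP (proj2_sig g).
  rewrite /hval; move: pk pm; set i := pickm _ => pk pm.
  case => [[m' [f [z [hm e]]]] | kt].
    have : exists t t' : 'I_m.+1, t < t' /\ dfun f t = dfun f t'.
      case: (inj_or_not f) => // inj; exfalso.
      by have := leq_card (dfun f) inj; rewrite !card_ord; lia.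
    move=> [t [t' [htt' ef]]].
    have eg : dfun (sval g : Dmap m n.+2) t = dfun (sval g : Dmap m n.+2) t'.
      by rewrite /= e !dcompE ef.
    have [m'' [f' [g' [hm' [eg' _]]]]] := noninj_factor htt' eg.
    rewrite eg' lower_comp sact_comp.
    by apply: thin_deg; exists m'', f', (sact (lower i g') (y i)).
  apply: thinF => //; by rewrite lowerK.
Defined.

Hypothesis wc : weak_complicial X.

Lemma horn_fill : exists w : X n.+2,
  (forall i, i != k -> sact (dface i) w = y i) /\
  ((forall i, i != k -> thin (y i)) -> thin (sact (dface k) w)).
Proof.
have [g0 hg0] := wc.1 n.+1 k hmap.
have face : forall i : 'I_n.+3, i != k -> g0 n.+1 (dface i) = y i.
  move=> i ik.
  have Hin : inLam k (dface i) by apply/existsP; exists i; rewrite ik /=;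
     apply/forallP => t; apply/eqP; exact: misses_face.
  have := hg0 n.+1 (exist _ (dface i) Hin); rewrite /= => ->.
  by rewrite (@hval_eq _ (exist _ (dface i) Hin) i) //= ?lower_face ?sact_id //; exact: misses_face.
exists (g0 n.+2 (did n.+2)).
have fw : forall i : 'I_n.+3, sact (dface i) (g0 n.+2 (did n.+2)) = g0 n.+1 (dface i).
  by move=> i; rewrite -smf_nat /= dcomp_idl.
split; first by move=> i ik; rewrite fw face.
move=> ty.
have g1thin : forall m (a : DeltaK1 k m), thin a -> thin (g0 m a).
  move=> m a [d | [kt | [em hl]]].
  - by apply: smf_thin; left.
  - by apply: smf_thin; right.
  - subst m; have [pk pm] := pickmP hl.
    have := hg0 n.+1 (exist _ a hl); rewrite /= => ->.
    rewrite (@hval_eq _ (exist _ a hl) (pickm a)) //=.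
    exact: endo_thin (ty _ pk).
pose g1 := @SMap (DeltaK1 k) X (fun m a => g0 m a) (fun m m' f a => smf_nat g0 f a) g1thin.
have [g2 hg2] := wc.2 n k g1.
rewrite fw; have := hg2 n.+1 (dface k); rewrite /= => <-.
by apply: smf_thin; right; right.
Qed.
End Horn.


Ltac dec4 := repeat match goal with
 | |- context [if ?a == ?b then _ else _] => case: (eqVneq a b) => ?; try (exfalso; lia)
 end.

Lemma face_face N (i i' : 'I_N.+3) (j j' : 'I_N.+2) :
  (forall t, t <= N -> bump i (bump j t) = bump i' (bump j' t)) ->
  dcomp (dface i) (dface j) = dcomp (dface i') (dface j').
Proof.
move=> H; apply: dmap_eqv => t; rewrite !dcompE !dfaceE /=; apply: H; have := ltn_ord t; lia.
Qed.

Section Tetra.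
Variables (X : strat) (x : X 0) (n : nat).
Definition T (j : nat) (a b c : X n) (i : nat) : X n :=
  if i == j then a else if i == j.+1 then c else if i == j.+2 then b else cst n x.
Definition Wit (w : X n.+1) (F : nat -> X n) :=
  thin w /\ forall p : 'I_n.+2, sact (dface p) w = F p.

Hypothesis wc : weak_complicial X.

Lemma tetra1 j (hj : j < n) (e01 e02 e03 e12 e13 e23 : X n) (y0 y2 y3 : X n.+1) :
  Wit y0 (T j e01 e03 e02) -> Wit y2 (T j e02 e23 e12) -> Wit y3 (T j e03 e23 e13) ->
  exists w, Wit w (T j e01 e13 e12).
Proof.
move=> [t0 h0] [t2 h2] [t3 h3].
pose k : 'I_n.+3 := inord j.+1.
have ek : nat_of_ord k = j.+1 by rewrite inordK //; lia.
pose y (i : 'I_n.+3) := if nat_of_ord i == j then y0 else if nat_of_ord i == j.+1 then cst n.+1 x else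
   if nat_of_ord i == j.+2 then y2 else if nat_of_ord i == j.+3 then y3 else cst n.+1 x.
have compat : forall i q : 'I_n.+3, i < q -> i != k -> q != k ->
    sact (dface (inord i : 'I_n.+2)) (y q) = sact (dface (inord q.-1 : 'I_n.+2)) (y i).
  move=> i q lt ik qk.
  have ik' : nat_of_ord i <> nat_of_ord k by move=> e; move: ik; rewrite (val_inj e) eqxx.
  have qk' : nat_of_ord q <> nat_of_ord k by move=> e; move: qk; rewrite (val_inj e) eqxx.
  have hq := ltn_ord q.
  rewrite /y; dec4; rewrite ?h0 ?h2 ?h3 ?sact_cst ?inordK; try lia; try rewrite /T; dec4; reflexivity.
have thinF : forall (i : 'I_n.+3) m (g : Dmap m n.+1), i != k ->
    kthin k (dcomp (dface i) g) -> thin (sact g (y i)).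
  move=> i m g ik kt.
  case: m g kt => [|m] g kt; first by case: (kthin0 kt).
  have ik' : nat_of_ord i <> nat_of_ord k by move=> e; move: ik; rewrite (val_inj e) eqxx.
  have hi := ltn_ord i.
  have hit : forall p, k.-1 <= p <= k.+1 -> exists t, bump i (dfun g t) = p.
    move=> p hp; have hp' : p < n.+3 by lia.
    have [t ht] := kt (inord p) ltac:(rewrite inordK //).
    by exists t; move: (congr1 val ht); rewrite dcompE dfaceE /= inordK.
  rewrite /y; dec4.
  - have [t ht] := hit j ltac:(lia); move: ht; rewrite /bump; lia.
  - have [t ht] := hit j.+2 ltac:(lia); move: ht; rewrite /bump; lia.
  - apply: (@wit_thin _ x _ _ (fun p : 'I_n.+2 => j <= p <= j.+2)) => //.
    + by move=> p hp; rewrite h3 /T; dec4; reflexivity.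
    + move=> p hp; have [t ht] := hit p ltac:(lia).
      exists t; apply: val_inj => /=; move: ht; have := ltn_ord (dfun g t); rewrite /bump; lia.
  - by rewrite sact_cst; apply: cst_thin.
have [w [hw tw]] := horn_fill compat thinF wc.
exists (sact (dface k) w); split.
  apply: tw => i ik.
  have ik' : nat_of_ord i <> nat_of_ord k by move=> e; move: ik; rewrite (val_inj e) eqxx.
  by rewrite /y; dec4 => //; apply: cst_thin.
move=> p; have hp := ltn_ord p; rewrite -sact_comp.
case: (ltnP p k) => hpk.
  rewrite (@face_face _ _ (inord p) _ (inord k.-1)); last first.
    by move=> t ht; rewrite !inordK /bump; lia.
  rewrite sact_comp hw; last first.
    by apply/eqP => /(congr1 val); rewrite /= inordK //; lia.
  rewrite /y !inordK; try lia; dec4; rewrite ?h0 ?h2 ?h3 ?sact_cst ?inordK; try lia;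
    rewrite /T; dec4; reflexivity.
rewrite (@face_face _ _ (inord p.+1) _ (inord k)); last first.
  by move=> t ht; rewrite !inordK /bump; lia.
rewrite sact_comp hw; last first.
  by apply/eqP => /(congr1 val); rewrite /= inordK //; lia.
rewrite /y !inordK; try lia; dec4; rewrite ?h0 ?h2 ?h3 ?sact_cst ?inordK; try lia;
  rewrite /T; dec4; reflexivity.
Qed.
Lemma tetra2 j (hj : j < n) (e01 e02 e03 e12 e13 e23 : X n) (y0 y1 y3 : X n.+1) :
  Wit y0 (T j e01 e03 e02) -> Wit y1 (T j e01 e13 e12) -> Wit y3 (T j e03 e23 e13) ->
  exists w, Wit w (T j e02 e23 e12).
Proof.
move=> [t0 h0] [t1 h1] [t3 h3].
pose k : 'I_n.+3 := inord j.+2.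
have ek : nat_of_ord k = j.+2 by rewrite inordK //; lia.
pose y (i : 'I_n.+3) := if nat_of_ord i == j then y0 else if nat_of_ord i == j.+1 then y1 else
   if nat_of_ord i == j.+2 then cst n.+1 x else if nat_of_ord i == j.+3 then y3 else cst n.+1 x.
have compat : forall i q : 'I_n.+3, i < q -> i != k -> q != k ->
    sact (dface (inord i : 'I_n.+2)) (y q) = sact (dface (inord q.-1 : 'I_n.+2)) (y i).
  move=> i q lt ik qk.
  have ik' : nat_of_ord i <> nat_of_ord k by move=> e; move: ik; rewrite (val_inj e) eqxx.
  have qk' : nat_of_ord q <> nat_of_ord k by move=> e; move: qk; rewrite (val_inj e) eqxx.
  have hq := ltn_ord q.
  rewrite /y; dec4; rewrite ?h0 ?h1 ?h3 ?sact_cst ?inordK; try lia; try rewrite /T; dec4; reflexivity.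
have thinF : forall (i : 'I_n.+3) m (g : Dmap m n.+1), i != k ->
    kthin k (dcomp (dface i) g) -> thin (sact g (y i)).
  move=> i m g ik kt.
  case: m g kt => [|m] g kt; first by case: (kthin0 kt).
  have ik' : nat_of_ord i <> nat_of_ord k by move=> e; move: ik; rewrite (val_inj e) eqxx.
  have hi := ltn_ord i.
  have hit : forall p, k.-1 <= p <= k.+1 -> exists t, bump i (dfun g t) = p.
    move=> p hp; have hp' : p < n.+3 by lia.
    have [t ht] := kt (inord p) ltac:(rewrite inordK //).
    by exists t; move: (congr1 val ht); rewrite dcompE dfaceE /= inordK.
  rewrite /y; dec4.
  - apply: (@wit_thin _ x _ _ (fun p : 'I_n.+2 => j <= p <= j.+2)) => //.
    + by move=> p hp; rewrite h0 /T; dec4; reflexivity.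
    + move=> p hp; have [t ht] := hit p.+1 ltac:(lia).
      exists t; apply: val_inj => /=; move: ht; have := ltn_ord (dfun g t); rewrite /bump; lia.
  - have [t ht] := hit j.+1 ltac:(lia); move: ht; rewrite /bump; lia.
  - have [t ht] := hit j.+3 ltac:(lia); move: ht; rewrite /bump; lia.
  - by rewrite sact_cst; apply: cst_thin.
have [w [hw tw]] := horn_fill compat thinF wc.
exists (sact (dface k) w); split.
  apply: tw => i ik.
  have ik' : nat_of_ord i <> nat_of_ord k by move=> e; move: ik; rewrite (val_inj e) eqxx.
  by rewrite /y; dec4 => //; apply: cst_thin.
move=> p; have hp := ltn_ord p; rewrite -sact_comp.
case: (ltnP p k) => hpk.
  rewrite (@face_face _ _ (inord p) _ (inord k.-1)); last first.
    by move=> t ht; rewrite !inordK /bump; lia.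
  rewrite sact_comp hw; last first.
    by apply/eqP => /(congr1 val); rewrite /= inordK //; lia.
  rewrite /y !inordK; try lia; dec4; rewrite ?h0 ?h1 ?h3 ?sact_cst ?inordK; try lia;
    rewrite /T; dec4; reflexivity.
rewrite (@face_face _ _ (inord p.+1) _ (inord k)); last first.
  by move=> t ht; rewrite !inordK /bump; lia.
rewrite sact_comp hw; last first.
  by apply/eqP => /(congr1 val); rewrite /= inordK //; lia.
rewrite /y !inordK; try lia; dec4; rewrite ?h0 ?h1 ?h3 ?sact_cst ?inordK; try lia;
  rewrite /T; dec4; reflexivity.
Qed.
End Tetra.


Lemma ifT (A : Type) (a b : A) : (if true then a else b) = a. Proof. by []. Qed.
Lemma ifF (A : Type) (a b : A) : (if false then a else b) = b. Proof. by []. Qed.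
Ltac dec := repeat match goal with
 | |- context [(?a == ?b :> nat)] => case: (eqVneq a b) => ?; try (exfalso; lia)
 | |- context [true || ?b] => rewrite orTb
 | |- context [false || ?b] => rewrite orFb
 | |- context [if true then _ else _] => rewrite ifT
 | |- context [if false then _ else _] => rewrite ifF
 end.

Lemma misses_nsurj m N (f : Dmap m N) c : misses f c -> ~~ dsurj f.
Proof.
move=> H; apply/forallPn; exists c; apply/existsPn => t; apply/eqP; exact: H.
Qed.

Lemma nsurj_misses m N (f : Dmap m N) : ~~ dsurj f -> exists c, misses f c.
Proof.
move=> /forallPn [c /existsPn H]; exists c => t e; by move: (H t); rewrite e eqxx.
Qed.

Definition sjf N (j : nat) (p : 'I_N.+2) : 'I_N.+1 := inord (minn (unbump j p) N).
Lemma sjf_mono N j (p q : 'I_N.+2) : p <= q -> sjf j p <= sjf j q.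
Proof. rewrite /sjf !inordK ?ltnS ?geq_minr // /unbump; lia. Qed.
Definition sj N j : Dmap N.+1 N := mkD (@sjf_mono N j).
Lemma sj_val N j p : val (dfun (sj N j) p) = minn (unbump j p) N.
Proof. by rewrite mkDE /sjf /= inordK // ltnS geq_minr. Qed.

Lemma sj_face_miss N j (i : 'I_N.+2) : j <= N -> i != j :> nat -> i != j.+1 :> nat ->
  exists c, misses (dcomp (sj N j) (dface i)) c.
Proof.
move=> hj h1 h2; have hi := ltn_ord i.
exists (inord (if i < j then nat_of_ord i else i.-1) : 'I_N.+1) => t /(congr1 val).
rewrite dcompE sj_val dfaceE /= inordK; last by case: ifP; lia.
have := ltn_ord t; rewrite /unbump /bump; case: ifP; lia.
Qed.

Lemma sj_face_id N j (i : 'I_N.+2) : j <= N -> (i == j :> nat) || (i == j.+1 :> nat) ->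
  dcomp (sj N j) (dface i) = did N.
Proof.
move=> hj h; apply: dmap_eqv => t; rewrite dcompE sj_val dfaceE didE /=.
have := ltn_ord t; move: h; rewrite /unbump /bump; lia.
Qed.

Section Wits.
Variables (X : strat) (x : X 0) (n : nat).
Notation eps := (cst n x).

Lemma Wit_ext (w : X n.+1) (F G : nat -> X n) :
  (forall p, p < n.+2 -> F p = G p) -> Wit w F -> Wit w G.
Proof. by move=> e [t h]; split => // p; rewrite h e. Qed.

Lemma cst_wit j : Wit (cst n.+1 x) (T x j eps eps eps).
Proof.
split; first exact: cst_thin.
by move=> p; rewrite sact_cst /T; dec.
Qed.

Lemma degen_wit j (u : X n) : j <= n -> bdry_const u x ->
  Wit (sact (sj n j) u) (fun i => if (i == j) || (i == j.+1) then u else eps).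
Proof.
move=> hj bu; split.
  by apply: thin_deg; exists n, (sj n j), u.
move=> p; rewrite -sact_comp.
case: ifP => h.
  by rewrite sj_face_id // sact_id.
have [c hc] := sj_face_miss hj (i := p) ltac:(move: h; lia) ltac:(move: h; lia).
exact: bu (misses_nsurj hc).
Qed.

Lemma wit_miss (w : X n.+1) F m (g : Dmap m n.+1) (c : 'I_n.+2) :
  Wit w F -> misses g c -> F c = eps -> sact g w = cst m x.
Proof.
move=> [_ h] hc e; rewrite -(lowerK hc) sact_comp h e; exact: sact_cst.
Qed.

Hypothesis wc : weak_complicial X.

Lemma transport j (hj : j < n) (u w : X n) z : bdry_const u x ->
  Wit z (T x j u eps w) -> exists z', Wit z' (T x j eps w u).
Proof.
move=> bu hz.
have y0 : Wit (sact (sj n j.+1) u) (T x j eps u u).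
  apply: (Wit_ext _ (degen_wit hj bu)) => q _; rewrite /T; dec; reflexivity.
have y2 : Wit (sact (sj n j) u) (T x j u eps u).
  apply: (Wit_ext _ (degen_wit (ltnW hj) bu)) => q _; rewrite /T; dec; reflexivity.
exact: (tetra1 wc hj y0 y2 hz).
Qed.

Lemma compose j (hj : j < n) (u v w : X n) z1 z2 :
  Wit z1 (T x j eps v u) -> Wit z2 (T x j eps w v) -> exists z', Wit z' (T x j eps w u).
Proof.
move=> h1 h2; exact: (tetra2 wc hj (cst_wit j) h1 h2).
Qed.
End Wits.




Section Rcon.
Variables (n : nat).

Definition rf m (f : Dmap m n) (t : Dmap m 1) (p : 'I_m.+1) : 'I_n.+2 :=
  inord (dfun f p + ((nat_of_ord (dfun t p) == 1) && (nat_of_ord (dfun f p) == n))).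
Lemma rf_val m f t p : nat_of_ord (@rf m f t p) =
   dfun f p + ((nat_of_ord (dfun t p) == 1) && (nat_of_ord (dfun f p) == n)).
Proof. rewrite /rf inordK //; have := ltn_ord (dfun f p); lia. Qed.
Lemma rf_mono m f t (p q : 'I_m.+1) : p <= q -> @rf m f t p <= rf f t q.
Proof.
move=> h; have h1 := dfun_mono f h; have h2 := dfun_mono t h.
have := ltn_ord (dfun f q); have := ltn_ord (dfun t q).
rewrite !rf_val; lia.
Qed.
Definition rmap m f t : Dmap m n.+1 := mkD (@rf_mono m f t).
Lemma rmap_val m f t p : nat_of_ord (dfun (@rmap m f t) p) =
   dfun f p + ((nat_of_ord (dfun t p) == 1) && (nat_of_ord (dfun f p) == n)).
Proof. by rewrite mkDE rf_val. Qed.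
Lemma rmap_comp l m f t (g : Dmap l m) : rmap (dcomp f g) (dcomp t g) = dcomp (@rmap m f t) g.
Proof. by apply: dmap_eqv => p /=; rewrite dcompE !rmap_val !dcompE. Qed.
End Rcon.

Section Rcon2.
Variables (X : strat) (x : X 0) (n : nat) (hn : 0 < n).
Variables (v u : X n) (psi : X n.+1).
Hypothesis hpsi : Wit psi (T x n.-1 (cst n x) v u).

Lemma Rthin m (ft : (sprod (DeltaS n) (DeltaT 0)) m) : thin ft -> thin (sact (rmap ft.1 ft.2) psi).
Proof.
case: ft => f t [tf tt] /=.
case: tf => [[m' [h [z [hm /= ef]]]] | []].
have [s [s' [hs ef']]] : exists s s' : 'I_m.+1, s < s' /\ dfun f s = dfun f s'.
  case: (inj_or_not h) => [inj | [s [s' [hs e]]]].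
    by exfalso; have := leq_card (dfun h) inj; rewrite !card_ord; lia.
  by exists s, s'; split => //; rewrite ef /= !dcompE e.
case: (inj_or_not (rmap f t)) => [inj | [r [r' [hr er]]]]; last exact: noninj_thin hr er.
have hne : nat_of_ord (dfun (rmap f t) s) <> nat_of_ord (dfun (rmap f t) s').
  by move=> /val_inj /inj e; move: hs; rewrite e ltnn.
have ht := dfun_mono t (ltnW hs).
have := ltn_ord (dfun t s'); have := ltn_ord (dfun f s').
move: hne; rewrite !rmap_val ef' => hne h1 h2.
case: hpsi => tpsi fpsi.
apply: (@wit_thin _ x _ _ (fun p : 'I_n.+2 => (nat_of_ord p == n) || (nat_of_ord p == n.+1))) => //.
- by move: hs; lia.
- move=> p hp; rewrite fpsi /T; have := ltn_ord p; move: hp; dec => hq hl; try reflexivity; by exfalso; apply: hq.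
- move=> p hp; case/orP: hp => /eqP hp.
    by exists s; apply: val_inj; rewrite /= rmap_val ef' hp; lia.
  by exists s'; apply: val_inj; rewrite /= rmap_val hp; lia.
Qed.

Definition Rmap : smap (sprod (DeltaS n) (DeltaT 0)) X.
Proof.
refine (@SMap (sprod (DeltaS n) (DeltaT 0)) X (fun m ft => sact (rmap ft.1 ft.2) psi) _ Rthin).
by move=> m m' g [f t] /=; rewrite rmap_comp sact_comp.
Defined.

Lemma R_shtpy : shtpy v u.
Proof.
case: hpsi => tpsi fpsi.
have bot : forall m (a : Dmap m n), rmap a (dconst m (ord0 : 'I_2)) = dcomp (dface ord_max) a.
  move=> m a; apply: dmap_eqv => p /=; rewrite rmap_val dconstE dcompE dfaceE /=.
  have := ltn_ord (dfun a p); rewrite /bump; lia.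
have top : forall m (a : Dmap m n), rmap a (dconst m (ord_max : 'I_2)) = dcomp (dface (inord n)) a.
  move=> m a; apply: dmap_eqv => p /=; rewrite rmap_val dconstE dcompE dfaceE /= inordK //.
  have := ltn_ord (dfun a p); rewrite /bump; lia.
have ebot : forall m (a : Dmap m n), sact (rmap a (dconst m (ord0 : 'I_2))) psi = sact a v.
  move=> m a; rewrite bot sact_comp fpsi /T /=; dec; reflexivity.
exists Rmap; split; [|split].
- move=> m a /=; exact: ebot.
- move=> m a /=; rewrite top sact_comp fpsi /T inordK //; dec; reflexivity.
- move=> m a t /= /nsurj_misses [c hc].
  rewrite -ebot.
  case: (eqVneq (nat_of_ord c) n) => hcn.
    congr (sact _ psi); apply: dmap_eqv => p /=; rewrite !rmap_val dconstE.
    have : nat_of_ord (dfun a p) <> n by move=> e; apply: (hc p); apply: val_inj; rewrite /= e hcn.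
    lia.
  have hcn' : nat_of_ord c < n by have := ltn_ord c; lia.
  have mc : forall t' : Dmap m 1, misses (rmap a t') (inord c).
    move=> t' p /(congr1 val); rewrite /= rmap_val inordK; last lia.
    have : nat_of_ord (dfun a p) <> c by move=> e; apply: (hc p); apply: val_inj.
    have := ltn_ord (dfun a p); lia.
  have Fc : T x n.-1 (cst n x) v u (inord c : 'I_n.+2) = cst n x.
    by rewrite /T inordK; [dec | lia].
  by rewrite (wit_miss hpsi (mc t) Fc) (wit_miss hpsi (mc _) Fc).
Qed.
End Rcon2.




Section Bool1.
Variables (m : nat) (P : nat -> bool).
Hypothesis HP : forall p q, p <= q -> P p <= P q.
Lemma bf_mono (p q : 'I_m.+1) : p <= q -> (inord (P p) : 'I_2) <= (inord (P q) : 'I_2).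
Proof. by move=> h; rewrite !inordK; [apply: HP | case: (P q) | case: (P p)]. Qed.
Definition bmap : Dmap m 1 := mkD bf_mono.
Lemma bmap_val p : nat_of_ord (dfun bmap p) = P p.
Proof. by rewrite mkDE inordK //; case: (P p). Qed.
End Bool1.

Section Extract.
Variables (X : strat) (x : X 0) (n : nat) (hn : 0 < n) (a a' : X n).
Hypotheses (ba : bdry_const a x) (ba' : bdry_const a' x) (hh : shtpy a a') (wc : weak_complicial X).

Lemma tj_mono j p q : p <= q -> (j < p) <= (j < q).
Proof. by move=> h; case: (ltnP j p) => // h'; rewrite (leq_trans h' h). Qed.
Lemma tau_mono j p q : p <= q -> (j <= p) <= (j <= q).
Proof. by move=> h; case: (leqP j p) => // h'; rewrite (leq_trans h' h). Qed.

Lemma Kcore : exists w, Wit w (T x n.-1 (cst n x) a a').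
Proof.
case: hh => H [h0 [h1 hb]].
pose tj j : Dmap n.+1 1 := bmap n.+1 (@tj_mono j).
pose tau j : Dmap n 1 := bmap n (@tau_mono j).
pose S j := H n (did n, tau j).
have hw : forall j, j <= n -> Wit (H n.+1 (sj n j, tj j))
    (fun p => if p == j then S j else if p == j.+1 then S j.+1 else cst n x).
  move=> j hj; split.
    apply: smf_thin; split.
      by left; exists n, (sj n j), (did n); split => //=; rewrite dcomp_idl.
    by left; exists 1, (tj j), (did 1); split => //=; rewrite dcomp_idl.
  move=> p; rewrite -smf_nat /=.
  case: (boolP ((nat_of_ord p == j) || (nat_of_ord p == j.+1))) => hp.
    rewrite sj_face_id //; case/orP: hp => /eqP hp.
      have -> : dcomp (tj j) (dface p) = tau j.
        apply: dmap_eqv => q /=; rewrite /tj /tau dcompE !bmap_val dfaceE /= hp.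
        by have := ltn_ord q; rewrite /bump; lia.
      by rewrite hp; dec.
    have -> : dcomp (tj j) (dface p) = tau j.+1.
      apply: dmap_eqv => q /=; rewrite /tj /tau dcompE !bmap_val dfaceE /= hp.
      by have := ltn_ord q; rewrite /bump; lia.
    by rewrite hp; dec.
  have [c hc] := sj_face_miss hj (i := p) ltac:(move: hp; lia) ltac:(move: hp; lia).
  rewrite hb /=; last exact: misses_nsurj hc.
  by rewrite (ba (misses_nsurj hc)); move: hp; dec.
have S0 : S 0 = a'.
  rewrite /S; have -> : tau 0 = dconst n ord_max.
    by apply: dmap_eqv => q /=; rewrite /tau bmap_val dconstE.
  by rewrite h1 /= sact_id.
have Sn : S n.+1 = a.
  rewrite /S; have -> : tau n.+1 = dconst n ord0.
    apply: dmap_eqv => q /=; rewrite /tau bmap_val dconstE /=.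
    by have := ltn_ord q; lia.
  by rewrite h0 /= sact_id.
have bS0 : bdry_const (S 0) x by rewrite S0.
have Q : forall j, j < n -> exists w, Wit w (T x j (cst n x) (S j.+2) (S 0)).
  elim=> [|j IH] hj.
    have [w0 hw0] : exists w, Wit w (T x 0 (S 0) (cst n x) (S 1)).
      exists (H n.+1 (sj n 0, tj 0)); apply: (Wit_ext _ (hw 0 (leq0n _))) => q _.
      by rewrite /T; dec.
    have [w1 hw1] := transport wc hj bS0 hw0.
    have hw2 : Wit (H n.+1 (sj n 1, tj 1)) (T x 0 (cst n x) (S 2) (S 1)).
      by apply: (Wit_ext _ (hw 1 hj)) => q _; rewrite /T; dec.
    exact: (@compose X x n wc 0 hj _ _ _ _ _ hw1 hw2).
  have [w0 hw0] := IH (ltnW hj).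
  have hw0' : Wit w0 (T x j.+1 (S 0) (cst n x) (S j.+2)).
    by apply: (Wit_ext _ hw0) => q _; rewrite /T; dec.
  have [w1 hw1] := transport wc hj bS0 hw0'.
  have hw2 : Wit (H n.+1 (sj n j.+2, tj j.+2)) (T x j.+1 (cst n x) (S j.+3) (S j.+2)).
    by apply: (Wit_ext _ (hw j.+2 hj)) => q _; rewrite /T; dec.
  exact: (@compose X x n wc j.+1 hj _ _ _ _ _ hw1 hw2).
have [w hwq] := Q n.-1 ltac:(lia).
exists w; move: hwq; rewrite -S0 -Sn; have -> : n.-1.+2 = n.+1 by lia.
by [].
Qed.
End Extract.



Lemma theta_wit (X : strat) (x : X 0) n (hn : 0 < n) (th : smap (@DeltaK n (inord n)) X) a b :
  th n (dface (inord n.-1)) = a -> th n (dface ord_max) = b ->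
  (forall i : 'I_n.+2, i < n.-1 -> th n (dface i) = cst n x) ->
  Wit (th n.+1 (did n.+1)) (T x n.-1 a b (th n (dface (inord n)))).
Proof.
move=> ha hb hi; split.
  apply: smf_thin; right => j _; exists j; exact: didE.
move=> p; rewrite -smf_nat /= dcomp_idl.
case: (ltnP p n.-1) => h.
  by rewrite hi // /T; dec.
have hp := ltn_ord p.
have [e|[e|e]] : p = inord n.-1 \/ p = inord n \/ p = ord_max.
- case: (eqVneq (nat_of_ord p) n.-1) => e1; first by left; apply: val_inj; rewrite /= inordK //; lia.
  case: (eqVneq (nat_of_ord p) n) => e2; first by right; left; apply: val_inj; rewrite /= inordK //; lia.
  by right; right; apply: val_inj => /=; lia.
- by rewrite e ha /T inordK; [dec | lia].
- by rewrite e /T inordK; [dec | lia].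
- by rewrite e hb /T /=; dec.
Qed.

Theorem mainTheorem3 (X : strat) (x : X 0) (n : nat) (hn : 1 <= n)
  (a a' b b' : X n) (th th' : smap (@DeltaK n (inord n)) X) :
  weak_complicial X ->
  bdry_const a x -> bdry_const a' x -> bdry_const b x -> bdry_const b' x ->
  shtpy a a' -> shtpy b b' ->
  th n (dface (inord n.-1)) = a -> th n (dface ord_max) = b ->
  (forall i : 'I_n.+2, i < n.-1 -> th n (dface i) = cst n x) ->
  th' n (dface (inord n.-1)) = a' -> th' n (dface ord_max) = b' ->
  (forall i : 'I_n.+2, i < n.-1 -> th' n (dface i) = cst n x) ->
  shtpy (th n (dface (inord n))) (th' n (dface (inord n))).
Proof.
move=> wc ba ba' bb bb' hA hB ha hb hi ha' hb' hi'.
have hj : n.-1 < n by lia.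
have [wa hwa] := Kcore hn ba ba' hA wc.
have [wb hwb] := Kcore hn bb bb' hB wc.
have t1 := theta_wit hn ha hb hi.
have t2 := theta_wit hn ha' hb' hi'.
have y0 : Wit (sact (sj n n.-1) a') (T x n.-1 a' (cst n x) a').
  apply: (Wit_ext _ (degen_wit (leq_pred n) ba')) => q _; rewrite /T; dec; reflexivity.
have [w1 hw1] := tetra2 wc hj y0 t2 hwb.
have [w2 hw2] := tetra1 wc hj hwa hw1 t1.
exact: (@R_shtpy X x n hn _ _ _ hw2).
Qed.
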